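(* Let $(E,\tau)$ be a violator space. Then $(E,\tau)$ is uniquely generated (in the sense that every $X\subseteq E$ has exactly one inclusion-minimal subset $B\subseteq X$ with $\tau(B)=\tau(X)$) if and only if $\tau(X)=\tau(ex(X))$ for every $X\subseteq E$.
   Context: $E$ is a finite set and $\tau:2^E\to 2^E$. $(E,\tau)$ is a violator space if (C1) $Y\subseteq\tau(Y)$ for all $Y\subseteq E$, and (C22) for all $F,G\subseteq E$, $F\subseteq G\subseteq\tau(F)$ implies $\tau(G)=\tau(F)$. An element $x\in X$ is an extreme point of $X$ if $x\notin\tau(X-\{x\})$; $ex(X)$ is the set of extreme points of $X$. *)

(* Defs.v *)
From mathcomp Require Import all_boot.
Set Implicit Arguments. Unset Strict Implicit. Unset Printing Implicit Defensive.

Definition violator_space (E : finType) (tau : {set E} -> {set E}) : Prop :=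
  (forall Y : {set E}, Y \subset tau Y) /\
  (forall F G : {set E}, F \subset G -> G \subset tau F -> tau G = tau F).

Definition ex (E : finType) (tau : {set E} -> {set E}) (X : {set E}) : {set E} :=
  [set x in X | x \notin tau (X :\ x)].

Definition is_basis (E : finType) (tau : {set E} -> {set E}) (X B : {set E}) : Prop :=
  minset (fun B' : {set E} => (B' \subset X) && (tau B' == tau X)) B.

Definition uniquely_generated (E : finType) (tau : {set E} -> {set E}) : Prop :=
  forall X : {set E}, exists! B : {set E}, is_basis tau X B.

(* Main.v *)
Require Import Defs.
From mathcomp Require Import all_boot.

Lemma ex_sub_basis (E : finType) (tau : {set E} -> {set E}) (X B : {set E}) :
  violator_space tau -> B \subset X -> tau B = tau X -> ex tau X \subset B.
Proof.
move=> [C1 C22] sBX eB; apply/subsetP=> x; rewrite inE => /andP[xX xn].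
apply/negPn/negP=> xB.
have sBXx : B \subset X :\ x.
  apply/subsetP=> y yB; rewrite !inE (subsetP sBX) // andbT.
  by apply/eqP=> e; rewrite -e yB in xB.
have h : tau (X :\ x) = tau B.
  apply: C22 => //; rewrite eB; apply: subset_trans (C1 X); exact: subsetDl.
by move: xn; rewrite h eB (subsetP (C1 X)).
Qed.

Theorem mainTheorem14 (E : finType) (tau : {set E} -> {set E}) :
  violator_space tau ->
  (uniquely_generated tau <-> forall X : {set E}, tau X = tau (ex tau X)).
Proof.
move=> V; have [C1 C22] := V; split.
- move=> UG X.
  have [B [bB uB]] := UG X.
  move: (bB) => /minsetP[/andP[sBX /eqP eB] minB].
  have exB := @ex_sub_basis _ _ _ _ V sBX eB.
  suff sBe : B \subset ex tau X.
    by have -> : ex tau X = B by apply/eqP; rewrite eqEsubset exB sBe.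
  apply/subsetP=> x xB; rewrite inE (subsetP sBX) //=.
  apply/negP=> xt.
  have hX : tau X = tau (X :\ x).
    apply: C22; first exact: subsetDl.
    apply/subsetP=> y yX; case: (eqVneq y x) => [->//|nyx].
    by apply: (subsetP (C1 _)); rewrite !inE nyx.
  pose P := fun B' : {set E} => (B' \subset X :\ x) && (tau B' == tau (X :\ x)).
  have PX : P (X :\ x) by rewrite /P subxx eqxx.
  have [B2 mB2 sB2] := minset_exists PX.
  move: (mB2) => /minsetP[/andP[sB2X /eqP eB2] minB2].
  have bB2 : is_basis tau X B2.
    apply/minsetP; split.
      by rewrite (subset_trans sB2X (subsetDl _ _)) eB2 -hX eqxx.
    move=> C /andP[sCX /eqP eC] sCB2; apply: minB2 => //.
    by rewrite /P (subset_trans sCB2 sB2X) eC hX eqxx.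
  have e := uB _ bB2; subst B2.
  by move: (subsetP sB2X x xB); rewrite !inE eqxx.
- move=> H X; exists (ex tau X).
  have se : ex tau X \subset X by apply/subsetP=> y; rewrite inE => /andP[].
  split.
    apply/minsetP; split; first by rewrite se -H eqxx.
    move=> C /andP[sCX /eqP eC] sCe; apply/eqP; rewrite eqEsubset sCe.
    exact: @ex_sub_basis _ _ _ _ V sCX eC.
  move=> B bB; move: (bB) => /minsetP[_ minB].
  move: (bB) => /minsetP[/andP[sBX /eqP eB] _].
  apply: minB; first by rewrite se -H eqxx.
  exact: @ex_sub_basis _ _ _ _ V sBX eB.
Qed.
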